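(* Let $\Gamma\subset PGL_{2n+2}(\mathbb{C})$ be a group of type $\mathcal{L}$. Then for any normal sequence $(\sigma_\nu)$ in $\Gamma$, the limit image $I(\hat\sigma_\nu)\subset\mathbb{P}^N$ of the sequence $(\hat\sigma_\nu)$ consists of a single point, and this point lies in $\mathcal{G}$.
   Context: Fix $n\geq1$. An $n$-plane is an $n$-dimensional projective linear subspace of $\mathbb{P}^{2n+1}$; $|\ell|$ denotes its point set. Let $N=\binom{2n+2}{n+1}-1$, $\mathbb{P}^N=\mathbb{P}(\Lambda^{n+1}\mathbb{C}^{2n+2})$, and $\mathcal{G}\subset\mathbb{P}^N$ the Grassmannian $Gr(n+1,2n+2)$ embedded by Plücker coordinates; $\hat\ell\in\mathcal{G}$ is the point of an $n$-plane $\ell$. Each $\sigma\in PGL_{2n+2}(\mathbb{C})$ induces $\hat\sigma\in PGL_{N+1}(\mathbb{C})$ via the action of $\Lambda^{n+1}$ of a representative. For a sequence $(\tau_\nu)$ of pairwise distinct elements of $PGL_{m+1}(\mathbb{C})$, pick representatives $\tilde\tau_\nu\in GL_{m+1}(\mathbb{C})$ whose largest entry in absolute value is $1$; if they can be chosen to converge to a matrix $T\in M_{m+1}(\mathbb{C})$, the limit image of $(\tau_\nu)$ is $\mathbb{P}(\operatorname{Im}T)$ and the limit kernel is $\mathbb{P}(\operatorname{Ker}T)$. For a discrete subgroup $\Gamma\subset PGL_{2n+2}(\mathbb{C})$, a sequence $(\sigma_\nu)\subset\Gamma$ is normal if it consists of distinct elements and both $(\sigma_\nu)$ and $(\hat\sigma_\nu)$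 admit such convergent normalized representatives. An $n$-plane $\ell$ is a limit $n$-plane of $\Gamma$ if $\hat\ell\in\mathcal{G}\cap I(\hat\sigma_\nu)$ for some normal sequence $(\sigma_\nu)$ in $\Gamma$, where $I(\hat\sigma_\nu)$ is the limit image of $(\hat\sigma_\nu)$. $\Lambda(\Gamma)$ is the union of $|\ell|$ over all limit $n$-planes and $\Omega(\Gamma)=\mathbb{P}^{2n+1}\setminus\Lambda(\Gamma)$. A domain in $\mathbb{P}^{2n+1}$ is large if it contains an $n$-plane. A discrete subgroup $\Gamma\subset PGL_{2n+2}(\mathbb{C})$ is of type $\mathcal{L}$ if $\Omega(\Gamma)$ contains a large domain. *)

(* Defs.v *)
From HB Require Import structures.
From mathcomp Require Import all_boot all_order all_algebra.
From mathcomp Require Import reals.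
From mathcomp.real_closed Require Import complex.
Set Implicit Arguments. Unset Strict Implicit. Unset Printing Implicit Defensive.
Import Order.TTheory GRing.Theory Num.Theory.
Local Open Scope ring_scope.

(* k-element subsets of 'I_m : the index set of the standard basis
   e_{i_1} /\ ... /\ e_{i_k} (i_1 < ... < i_k) of Lambda^k C^m. *)
Notation ksub m k := {S : {set 'I_m} | #|S| == k}.

Definition ksub_idx m k (S : ksub m k) (a : 'I_k) : 'I_m :=
  enum_val (cast_ord (esym (eqP (valP S))) a).

Section Defs.
Variable R : realType.
Local Notation C := R[i].

Definition cabs (z : C) : R := ComplexField.Normc.normc z.

Definition nonzero (I : finType) (v : I -> C) := exists i, v i != 0.

Definition appl (I J : finType) (A : I -> J -> C) (u : J -> C) : I -> C :=
  fun i => \sum_j A i j * u j.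

(* A and B represent the same projective transformation / element of PGL *)
Definition proportional (I J : finType) (A B : I -> J -> C) :=
  exists c : C, c != 0 /\ forall i j, A i j = c * B i j.

Definition normalized (I J : finType) (A : I -> J -> C) :=
  (forall i j, cabs (A i j) <= 1) /\ exists i j, cabs (A i j) = 1.

Definition cvg_mat (I J : finType) (M : nat -> I -> J -> C) (T : I -> J -> C) :=
  forall e : R, 0 < e -> exists N : nat, forall nu : nat, (N <= nu)%N ->
    forall i j, cabs (M nu i j - T i j) < e.

(* T is a limit of normalized representatives of the projective classes of
   the M nu : representatives are the nonzero scalar multiples c * M nu. *)
Definition limit_of (I J : finType) (M : nat -> I -> J -> C) (T : I -> J -> C) :=
  exists c : nat -> C, (forall nu, c nu != 0) /\
    (forall nu, normalized (fun i j => c nu * M nu i j)) /\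
    cvg_mat (fun nu i j => c nu * M nu i j) T.

(* the point [v] of P(C^I) lies in the limit image P(Im T) of (M nu) *)
Definition in_limit_image (I : finType) (M : nat -> I -> I -> C) (v : I -> C) :=
  exists T, limit_of M T /\ nonzero v /\ exists u, forall i, v i = appl T u i.

(* Lambda^k g, in the basis of k-subsets: entries are the k x k minors *)
Definition extp m k (g : 'M[C]_m) : ksub m k -> ksub m k -> C :=
  fun S T => \det (\matrix_(a < k, b < k) g (ksub_idx S a) (ksub_idx T b)).

Arguments extp {m} k g.

Definition plucker k m (B : 'M[C]_(k, m)) : ksub m k -> C :=
  fun S => \det (\matrix_(a < k, b < k) B a (ksub_idx S b)).

(* an n-plane of P^(2n+1) is given by B : 'M_(n+1, 2n+2) with row_free B
   (its rows span the corresponding (n+1)-dim. subspace); x represents a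
   point of |l| iff x is a nonzero vector of the row space of B. *)
Definition in_plane k m (B : 'M[C]_(k, m)) (x : 'I_m -> C) :=
  nonzero x /\ exists u : 'I_k -> C, forall j, x j = \sum_a u a * B a j.

(* A subgroup Gamma of PGL_m(C) is encoded by its full preimage G in
   GL_m(C): a subgroup of GL_m(C) containing all nonzero scalar matrices. *)
Definition pgl_subgroup m (G : 'M[C]_m -> Prop) :=
  (forall g, G g -> g \in unitmx) /\ G 1%:M /\
  (forall g h, G g -> G h -> G (g *m h)) /\
  (forall g, G g -> G (invmx g)) /\
  (forall g c, G g -> c != 0 -> G (c *: g)).

(* discreteness in PGL_m(C) (quotient topology): every element [gamma] has
   a neighbourhood { [h] : |h - gamma| < e } containing no other element. *)
Definition pgl_discrete m (G : 'M[C]_m -> Prop) :=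
  forall gamma, G gamma -> exists e : R, 0 < e /\
    forall g c, G g -> c != 0 ->
      (forall i j, cabs (c * g i j - gamma i j) < e) ->
      proportional (fun i j => g i j) (fun i j => gamma i j).

Definition mfun m (g : 'M[C]_m) : 'I_m -> 'I_m -> C := fun i j => g i j.

Definition normal_seq n (G : 'M[C]_(n.*2.+2) -> Prop)
    (s : nat -> 'M[C]_(n.*2.+2)) :=
  (forall nu, G (s nu)) /\
  (forall nu mu, nu <> mu -> ~ proportional (mfun (s nu)) (mfun (s mu))) /\
  (exists T, limit_of (fun nu => mfun (s nu)) T) /\
  (exists T, limit_of (fun nu => extp n.+1 (s nu)) T).

Definition limit_plane n (G : 'M[C]_(n.*2.+2) -> Prop)
    (B : 'M[C]_(n.+1, n.*2.+2)) :=
  row_free B /\ exists s, normal_seq G s /\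
    in_limit_image (fun nu => extp n.+1 (s nu)) (plucker B).

Definition Lambda n (G : 'M[C]_(n.*2.+2) -> Prop) (x : 'I_(n.*2.+2) -> C) :=
  exists B, limit_plane G B /\ in_plane B x.

Definition Omega n (G : 'M[C]_(n.*2.+2) -> Prop) (x : 'I_(n.*2.+2) -> C) :=
  nonzero x /\ ~ Lambda G x.

(* subsets of P(C^I) are encoded by their (saturated) preimages *)
Definition cone (I : finType) (D : (I -> C) -> Prop) :=
  (forall x, D x -> nonzero x) /\
  (forall x c, D x -> c != 0 -> D (fun i => c * x i)).

Definition open_vset (I : finType) (U : (I -> C) -> Prop) :=
  forall x, U x -> exists e : R, 0 < e /\
    forall y, (forall i, cabs (y i - x i) < e) -> U y.

Definition proj_open (I : finType) (U : (I -> C) -> Prop) :=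
  cone U /\ open_vset U.

Definition proj_connected (I : finType) (D : (I -> C) -> Prop) :=
  ~ exists U V, proj_open U /\ proj_open V /\
      (forall x, D x -> U x \/ V x) /\
      (exists x, D x /\ U x) /\ (exists x, D x /\ V x) /\
      (forall x, D x -> U x -> V x -> False).

Definition proj_domain (I : finType) (D : (I -> C) -> Prop) :=
  proj_open D /\ (exists x, D x) /\ proj_connected D.

Definition large_domain n (D : ('I_(n.*2.+2) -> C) -> Prop) :=
  proj_domain D /\
  exists B : 'M[C]_(n.+1, n.*2.+2), row_free B /\ forall x, in_plane B x -> D x.

Definition type_L n (G : 'M[C]_(n.*2.+2) -> Prop) :=
  pgl_subgroup G /\ pgl_discrete G /\
  exists D, large_domain D /\ forall x, D x -> Omega G x.

End Defs.
Arguments extp {R m} k g.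

(* Main.v *)
Require Import Defs.
From HB Require Import structures.
From mathcomp Require Import all_boot all_order all_fingroup all_algebra.
From mathcomp Require Import reals.
From mathcomp.real_closed Require Import complex.
From mathcomp Require Import ring lra.
From Stdlib Require Import IndefiniteDescription.
Set Implicit Arguments. Unset Strict Implicit. Unset Printing Implicit Defensive.
Import Order.TTheory GRing.Theory Num.Theory.
Local Open Scope ring_scope.


Lemma idx_in m k (S : ksub m k) a : ksub_idx S a \in val S.
Proof. exact: enum_valP. Qed.

Lemma idx_inj m k (S : ksub m k) : injective (ksub_idx S).
Proof. by move=> a b /enum_val_inj /cast_ord_inj. Qed.

Lemma idx_surj m k (S : ksub m k) x : x \in val S -> exists a, ksub_idx S a = x.
Proof.
move=> Hx; exists (cast_ord (eqP (valP S)) (enum_rank_in Hx x)).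
by rewrite /ksub_idx cast_ordK enum_rankK_in.
Qed.

Section Alg.
Variable F : fieldType.
Definition rsel m k (B : 'M[F]_(m,k)) (f : 'I_k -> 'I_m) : 'M_k := \matrix_(i,j) B (f i) j.
Definition pl k m (B : 'M[F]_(k,m)) (S : ksub m k) : F :=
  \det (\matrix_(a < k, b < k) B a (ksub_idx S b)).
Definition FF m k := ('I_m ^ k)%type.

Lemma expand_mul k m (A : 'M[F]_(k,m)) (B : 'M[F]_(m,k)) :
 \det (A *m B) = \sum_(f : FF m k) (\prod_i A i (f i)) * \det (rsel B f).
Proof.
pose AB (s : 'S_k) i j := A i j * B j (s i).
transitivity (\sum_(s : 'S_k) \sum_(f : FF m k) (-1) ^+ s * \prod_i AB s i (f i)).
  apply: eq_bigr => s _; rewrite -big_distrr /=; congr (_ * _).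
  rewrite -(bigA_distr_bigA (AB s)) /=.
  by apply: eq_bigr => x _; rewrite mxE.
rewrite exchange_big; apply: eq_bigr => f _ /=.
rewrite big_distrr /=; apply: eq_bigr => s _.
rewrite /AB big_split /= mulrCA; congr (_ * (_ * _)).
by apply: eq_bigr => i _; rewrite mxE.
Qed.

Lemma MP m k (S0 : ksub m k) (f : 'I_k -> 'I_m) : exists e : F, exists T : ksub m k,
  forall B : 'M[F]_(m,k), \det (rsel B f) = e * \det (rsel B (ksub_idx T)).
Proof.
case: (boolP (injectiveb f)) => [/injectiveP finj | /injectivePn [i1 [i2 Hne Heq]]]; last first.
  exists 0, S0 => B; rewrite mul0r; apply: (determinant_alternate Hne) => j.
  by rewrite !mxE Heq.
have cT : #|f @: setT| == k by rewrite card_imset // cardsT card_ord.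
pose T : ksub m k := exist (fun S : {set 'I_m} => #|S| == k) _ cT.
have fT i : f i \in val T by rewrite /= imset_f.
pose g i := if [pick a | ksub_idx T a == f i] is Some a then a else i.
have gE i : ksub_idx T (g i) = f i.
  rewrite /g; case: pickP => [a /eqP //| H].
  by have [a Ha] := idx_surj (fT i); move: (H a); rewrite Ha eqxx.
have ginj : injective g by move=> i j /(congr1 (ksub_idx T)); rewrite !gE => /finj.
pose s := perm ginj.
exists ((-1) ^+ s), T => B.
have -> : rsel B f = row_perm s (rsel B (ksub_idx T)).
  by apply/matrixP => i j; rewrite !mxE permE gE.
by rewrite row_permE det_mulmx det_perm.
Qed.

Lemma det_sel m k (T T' : ksub m k) :
  \det (\matrix_(i,j) (ksub_idx T i == ksub_idx T' j)%:R : 'M[F]_k) = (T == T')%:R.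
Proof.
have [<-|ne] := eqVneq T T'.
  have -> : (\matrix_(i,j) (ksub_idx T i == ksub_idx T j)%:R : 'M[F]_k) = 1%:M.
    by apply/matrixP => i j; rewrite !mxE (inj_eq (@idx_inj _ _ T)).
  by rewrite det1.
have : ~~ (val T \subset val T').
  apply: contra ne => sub; apply/eqP/val_inj/eqP.
  by rewrite eqEcard sub (eqP (valP T)) (eqP (valP T')) /=.
case/subsetPn => x xT xT'.
have [i Hi] := idx_surj xT.
rewrite /= (expand_det_row _ i) big1 // => j _; rewrite !mxE.
case: eqP => [E|]; last by rewrite mul0r.
by move: xT'; rewrite -Hi E idx_in.
Qed.

Lemma CB k m (A : 'M[F]_(k,m)) (B : 'M[F]_(m,k)) (S0 : ksub m k) :
  \det (A *m B) = \sum_(T : ksub m k) pl A T * \det (rsel B (ksub_idx T)).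
Proof.
have H f : exists p : F * ksub m k, forall B : 'M[F]_(m,k),
    \det (rsel B f) = p.1 * \det (rsel B (ksub_idx p.2)).
  by have [e [T HT]] := MP S0 f; exists (e, T).
pose ch f := proj1_sig (constructive_indefinite_description _ (H f)).
have chP f B' : \det (rsel B' f) = (ch f).1 * \det (rsel B' (ksub_idx (ch f).2)).
  exact: (proj2_sig (constructive_indefinite_description _ (H f))).
pose c (A' : 'M[F]_(k,m)) T := \sum_(f : FF m k | (ch f).2 == T) (\prod_i A' i (f i)) * (ch f).1.
have gen A' B' : \det (A' *m B') = \sum_(T : ksub m k) c A' T * \det (rsel B' (ksub_idx T)).
  rewrite expand_mul (partition_big (fun f : FF m k => (ch f).2) predT) //=.
  apply: eq_bigr => T _; rewrite /c big_distrl /=; apply: eq_bigr => f /eqP <-.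
  by rewrite chP mulrA.
suff cE A' T : c A' T = pl A' T by rewrite gen; apply: eq_bigr => T _; rewrite cE.
pose E : 'M[F]_(m,k) := \matrix_(j,b) (j == ksub_idx T b)%:R.
have := gen A' E.
have -> : A' *m E = \matrix_(a,b) A' a (ksub_idx T b).
  apply/matrixP => a b; rewrite !mxE (bigD1 (ksub_idx T b)) //= mxE eqxx mulr1 big1 ?addr0 //.
  by move=> j /negPf nj; rewrite mxE nj mulr0.
move=> E'; rewrite /pl E' (bigD1 T) //= big1 ?addr0.
  have -> : rsel E (ksub_idx T) = \matrix_(i,j) (ksub_idx T i == ksub_idx T j)%:R.
    by apply/matrixP => i j; rewrite !mxE.
  by rewrite det_sel eqxx mulr1.
move=> T' nT; have -> : rsel E (ksub_idx T') = \matrix_(i,j) (ksub_idx T' i == ksub_idx T j)%:R.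
  by apply/matrixP => i j; rewrite !mxE.
by rewrite det_sel (negPf nT) mulr0.
Qed.

End Alg.


Section Alg2.
Variable F : fieldType.

Definition Emx k m (T : ksub m k) : 'M[F]_(k,m) := \matrix_(a,j) (j == ksub_idx T a)%:R.

Lemma pl_E k m (T T' : ksub m k) : pl (Emx T) T' = (T' == T)%:R.
Proof.
rewrite /pl -det_tr -(det_sel F T' T); congr (\det _).
by apply/matrixP => i j; rewrite !mxE.
Qed.

Definition ext m k (g : 'M[F]_m) (S T : ksub m k) : F :=
  \det (\matrix_(a < k, b < k) g (ksub_idx S a) (ksub_idx T b)).

Lemma ext_pl m k (s : 'M[F]_m) (Y : 'M[F]_(k,m)) (S' : ksub m k) :
  \sum_T ext s S' T * pl Y T = pl (Y *m s^T) S'.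
Proof.
pose G : 'M[F]_(m,k) := \matrix_(j,b) s (ksub_idx S' b) j.
have -> : pl (Y *m s^T) S' = \det (Y *m G).
  rewrite /pl; congr (\det _); apply/matrixP => a b; rewrite !mxE.
  by apply: eq_bigr => j _; rewrite !mxE.
rewrite (CB _ _ S'); apply: eq_bigr => T _; rewrite mulrC; congr (_ * _).
rewrite /ext -det_tr; congr (\det _); apply/matrixP => i j; rewrite !mxE //.
Qed.

Definition rrep k m (Y : 'M[F]_(k,m)) (a : 'I_k) (y : 'rV[F]_m) : 'M[F]_(k,m) :=
  \matrix_(i,j) if i == a then y 0 j else Y i j.

Lemma rrep_id k m (Y : 'M[F]_(k,m)) a : rrep Y a (row a Y) = Y.
Proof. by apply/matrixP => i j; rewrite !mxE; case: eqP => // ->. Qed.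

Lemma pl_lin k m (Y : 'M[F]_(k,m)) a y z c T :
  pl (rrep Y a (y + c *: z)) T = pl (rrep Y a y) T + c * pl (rrep Y a z) T.
Proof.
rewrite /pl -[pl_ in _ = pl_ + _]mul1r.
apply: (determinant_multilinear (i0 := a)).
- by apply/rowP => j; rewrite !mxE eqxx mul1r.
- by apply/matrixP => i j; rewrite !mxE eq_sym (negPf (neq_lift a i)).
- by apply/matrixP => i j; rewrite !mxE eq_sym (negPf (neq_lift a i)).
Qed.

Lemma pl_scale k m (Y : 'M[F]_(k,m)) t T : pl (t *: Y) T = t ^+ k * pl Y T.
Proof.
rewrite /pl -detZ; congr (\det _); apply/matrixP => i j; rewrite !mxE //.
Qed.

Definition Fw k m (w : ksub m k -> F) (Y : 'M[F]_(k,m)) := \sum_T w T * pl Y T.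

Lemma Fw_lin k m (w : ksub m k -> F) (Y : 'M[F]_(k,m)) a y z c :
  Fw w (rrep Y a (y + c *: z)) = Fw w (rrep Y a y) + c * Fw w (rrep Y a z).
Proof.
rewrite /Fw big_distrr -big_split /=; apply: eq_bigr => T _.
by rewrite pl_lin mulrDr mulrCA.
Qed.

Lemma Fw_scale k m (w : ksub m k -> F) (Y : 'M[F]_(k,m)) t :
  Fw w (t *: Y) = t ^+ k * Fw w Y.
Proof.
rewrite /Fw big_distrr /=; apply: eq_bigr => T _; by rewrite pl_scale mulrCA.
Qed.

Lemma Fw_sub k m (w w' : ksub m k -> F) c (Y : 'M[F]_(k,m)) :
  Fw (fun T => w' T - c * w T) Y = Fw w' Y - c * Fw w Y.
Proof.
rewrite /Fw big_distrr -sumrB /=; apply: eq_bigr => T _; by rewrite mulrBl mulrA.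
Qed.

Lemma Fw_poly k m (w : ksub m k -> F) (A B : 'M[F]_(k,m)) :
  exists p : {poly F}, forall t, p.[t] = Fw w (A + t *: B).
Proof.
exists (\sum_T (w T)%:P * \det (\matrix_(a < k, b < k)
     ((A a (ksub_idx T b))%:P + 'X * (B a (ksub_idx T b))%:P))) => t.
rewrite horner_sum /Fw; apply: eq_bigr => T _.
rewrite hornerM hornerC; congr (_ * _).
rewrite -horner_evalE -det_map_mx /pl; congr (\det _).
by apply/matrixP => i j; rewrite !mxE /= horner_evalE hornerD hornerM hornerX !hornerC.
Qed.

End Alg2.


Section LemA.
Variable F : numFieldType.

Lemma poly_vanish (p : {poly F}) : (forall t, p.[t] = 0) -> p = 0.
Proof.
move=> H; apply: (@roots_geq_poly_eq0 _ p [seq i%:R | i <- iota 0 (size p)]).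
- by apply/allP => x _; apply/rootP.
- by rewrite map_inj_uniq ?iota_uniq // => i j /eqP; rewrite eqr_nat => /eqP.
- by rewrite size_map size_iota.
Qed.

Lemma lemmaA k m (w w' : ksub m k -> F) (Y0 : 'M[F]_(k,m)) :
  (forall Y, Fw w Y = 0 -> Fw w' Y = 0) -> Fw w Y0 != 0 ->
  forall Y, Fw w' Y * Fw w Y0 = Fw w' Y0 * Fw w Y.
Proof.
move=> hyp nz Y.
pose l := Fw w' Y0 / Fw w Y0.
pose w'' := fun T => w' T - l * w T.
have HE Z : Fw w'' Z = Fw w' Z - l * Fw w Z by rewrite Fw_sub.
have step1 Z a y : Fw w Z != 0 -> Fw w'' Z = 0 -> Fw w'' (rrep Z a y) = 0.
  move=> nzZ; rewrite !HE => /eqP; rewrite subr_eq0 => /eqP HZ.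
  pose c := Fw w (rrep Z a y) / Fw w Z.
  have e1 : Fw w (rrep Z a (y + (- c) *: row a Z)) = 0.
    by rewrite Fw_lin rrep_id /c mulNr (mulfVK nzZ) subrr.
  have := hyp _ e1; rewrite Fw_lin rrep_id HZ => /eqP.
  rewrite addr_eq0 => /eqP ->; rewrite /c; apply/eqP; rewrite subr_eq0; apply/eqP.
  by rewrite mulNr opprK mulrCA (mulfVK nzZ).
pose M (a : nat) : 'M[F]_(k,m) := \matrix_(i,j) if (i < a)%N then Y i j else 0.
have step2 : forall a, (a <= k)%N -> forall t, Fw w'' (Y0 + t *: M a) = 0.
  elim => [_ t|a IH lak t].
    have -> : M 0%N = 0 by apply/matrixP => i j; rewrite !mxE.
    by rewrite scaler0 addr0 HE /l (mulfVK nz) subrr.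
  have lak' : (a < k)%N by [].
  pose i0 : 'I_k := Ordinal lak'.
  have DE t' : Y0 + t' *: M a.+1 = rrep (Y0 + t' *: M a) i0 (row i0 Y0 + t' *: row i0 Y).
    apply/matrixP => i j; rewrite !mxE.
    case: eqP => [->|ne]; first by rewrite /= ltnSn.
    have : (i < a.+1)%N = (i < a)%N.
      by rewrite ltnS leq_eqVlt; case: eqP => // E; case: ne; apply: val_inj.
    by move=> ->.
  have [pF HpF] := Fw_poly w Y0 (M a).
  have [pH HpH] := Fw_poly w'' Y0 (M a.+1).
  have pFH : pF * pH = 0.
    apply: poly_vanish => t'; rewrite hornerM HpF HpH.
    have [->|nzt] := eqVneq (Fw w (Y0 + t' *: M a)) 0; first by rewrite mul0r.
    by rewrite DE step1 ?mulr0 // IH // ltnW.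
  have pF0 : pF != 0.
    apply/eqP => E; move: nz; rewrite -[Y0](addr0) -(scale0r (M a)) -HpF E horner0 eqxx.
    by [].
  move: pFH => /eqP; rewrite mulf_eq0 (negPf pF0) /= => /eqP pH0.
  by rewrite -HpH pH0 horner0.
have MkE : M k = Y by apply/matrixP => i j; rewrite !mxE ltn_ord.
have step3 : Fw w'' Y = 0.
  have [q Hq] := Fw_poly w'' Y Y0.
  have : 'X * q = 0.
    apply: poly_vanish => s; rewrite hornerM hornerX Hq.
    have [->|nzs] := eqVneq s 0; first by rewrite mul0r.
    have -> : Y + s *: Y0 = s *: (Y0 + s^-1 *: M k).
      by rewrite MkE scalerDr scalerA divff // scale1r addrC.
    by rewrite Fw_scale step2 // !mulr0.
  move/eqP; rewrite mulf_eq0 polyX_eq0 /= => /eqP q0.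
  by rewrite -[Y]addr0 -(scale0r Y0) -Hq q0 horner0.
move: step3; rewrite HE => /eqP; rewrite subr_eq0 => /eqP ->.
by rewrite /l mulrAC (mulfVK nz).
Qed.

End LemA.


Section Cv.
Variable R : realType.
Local Notation C := R[i].

Lemma cabs_ge0 (z : C) : 0 <= cabs z.
Proof. by case: z => a b; rewrite /cabs /= sqrtr_ge0. Qed.
Lemma cabsD (x y : C) : cabs (x + y) <= cabs x + cabs y.
Proof. exact: le_normcD. Qed.
Lemma cabsM (x y : C) : cabs (x * y) = cabs x * cabs y.
Proof. exact: ComplexField.Normc.normcM. Qed.
Lemma cabsN (x : C) : cabs (- x) = cabs x.
Proof. exact: normcN. Qed.
Lemma cabsV (x : C) : cabs (x^-1) = (cabs x)^-1.
Proof. exact: ComplexField.Normc.normcV. Qed.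
Lemma cabs0 : cabs (0 : C) = 0.
Proof. exact: ComplexField.Normc.normc0. Qed.
Lemma cabs_eq0 (x : C) : (cabs x == 0) = (x == 0).
Proof.
apply/eqP/eqP => [/ComplexField.Normc.eq0_normc //|->]; exact: cabs0.
Qed.
Lemma cabsB (x y : C) : cabs (x - y) = cabs (y - x).
Proof. by rewrite -cabsN opprB. Qed.

Definition cv (u : nat -> C) (l : C) :=
  forall e : R, 0 < e -> exists N, forall nu, (N <= nu)%N -> cabs (u nu - l) < e.

Lemma cv_ext u v l : (forall n, u n = v n) -> cv u l -> cv v l.
Proof. by move=> E H e e0; have [N HN] := H e e0; exists N => nu /HN; rewrite E. Qed.

Lemma cv_ext_ev u v l N0 : (forall n, (N0 <= n)%N -> u n = v n) -> cv u l -> cv v l.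
Proof.
move=> E H e e0; have [N HN] := H e e0; exists (maxn N N0) => nu.
rewrite geq_max => /andP[h1 h2]; rewrite -E //; exact: HN.
Qed.

Lemma cv_const (c : C) : cv (fun _ => c) c.
Proof. by move=> e e0; exists 0%N => nu _; rewrite subrr cabs0. Qed.

Lemma cv_add u v a b : cv u a -> cv v b -> cv (fun n => u n + v n) (a + b).
Proof.
move=> Hu Hv e e0.
have e2 : 0 < e / 2 by rewrite divr_gt0.
have [N1 H1] := Hu _ e2; have [N2 H2] := Hv _ e2.
exists (maxn N1 N2) => nu; rewrite geq_max => /andP[h1 h2].
have := H1 _ h1; have := H2 _ h2.
have -> : u nu + v nu - (a + b) = (u nu - a) + (v nu - b) by rewrite opprD addrACA.
have := cabsD (u nu - a) (v nu - b); lra.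
Qed.

Lemma cv_mul u v a b : cv u a -> cv v b -> cv (fun n => u n * v n) (a * b).
Proof.
move=> Hu Hv e e0.
have ha := cabs_ge0 a; have hb := cabs_ge0 b.
pose d := Num.min 1 (e / (2 * (1 + cabs a + cabs b))).
have d0 : 0 < d by rewrite lt_min ltr01 /= divr_gt0 // mulr_gt0 //; lra.
have d1 : d <= 1 by rewrite ge_min lexx.
have de : d * (1 + cabs a + cabs b) <= e / 2.
  have : d <= e / (2 * (1 + cabs a + cabs b)) by rewrite ge_min lexx orbT.
  rewrite ler_pdivlMr; last lra.
  by move=> H; rewrite ler_pdivlMr //; lra.
have [N1 H1] := Hu _ d0; have [N2 H2] := Hv _ d0.
exists (maxn N1 N2) => nu; rewrite geq_max => /andP[h1 h2].
have E : u nu * v nu - a * b = (u nu - a) * (v nu - b) + a * (v nu - b) + b * (u nu - a).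
  by rewrite !mulrBr !mulrBl; ring.  
rewrite E.
have t1 := cabsD ((u nu - a) * (v nu - b) + a * (v nu - b)) (b * (u nu - a)).
have t2 := cabsD ((u nu - a) * (v nu - b)) (a * (v nu - b)).
rewrite !cabsM in t1 t2.
have x1 := H1 _ h1; have x2 := H2 _ h2.
have p1 := cabs_ge0 (u nu - a); have p2 := cabs_ge0 (v nu - b).
have q1 : cabs (u nu - a) * cabs (v nu - b) <= d * d.
  by apply: ler_pM => //; apply: ltW.
have q2 : cabs a * cabs (v nu - b) <= cabs a * d by apply: ler_wpM2l => //; apply: ltW.
have q3 : cabs b * cabs (u nu - a) <= cabs b * d by apply: ler_wpM2l => //; apply: ltW.
have q4 : d * d <= d by nra.
nra.
Qed.

Lemma cv_nz u l : cv u l -> l != 0 -> exists N, forall n, (N <= n)%N -> cabs l / 2 < cabs (u n).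
Proof.
move=> H nz; have l0 : 0 < cabs l by rewrite lt_def cabs_eq0 nz cabs_ge0.
have [N HN] := H (cabs l / 2) (divr_gt0 l0 (ltr0Sn _ 1)); exists N => n /HN h.
have := cabsD (u n) (l - u n); rewrite addrC subrK cabsB; lra.
Qed.

Lemma cv_inv u l : cv u l -> l != 0 -> cv (fun n => (u n)^-1) l^-1.
Proof.
move=> H nz e e0; have l0 : 0 < cabs l by rewrite lt_def cabs_eq0 nz cabs_ge0.
have [N1 H1] := cv_nz H nz.
have e1 : 0 < e * (cabs l * cabs l) / 2 by rewrite divr_gt0 // !mulr_gt0.
have [N2 H2] := H _ e1.
exists (maxn N1 N2) => n; rewrite geq_max => /andP[h1 h2].
have y1 := H1 _ h1; have y2 := H2 _ h2.
have un : u n != 0 by rewrite -cabs_eq0; apply/eqP => E; move: y1; rewrite E; lra.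
have -> : (u n)^-1 - l^-1 = (l - u n) * ((u n)^-1 * l^-1).
  by field; rewrite un nz.
rewrite cabsM cabsM !cabsV cabsB.
have pu : 0 < cabs (u n) by lra.
rewrite -invfM ltr_pdivrMr; last by rewrite mulr_gt0.
have el : 0 < e * cabs l by rewrite mulr_gt0.
have : 0 < (cabs (u n) - cabs l / 2) * (e * cabs l) by rewrite mulr_gt0 // subr_gt0.
nra.
Qed.

Lemma cv_unique u a b : cv u a -> cv u b -> a = b.
Proof.
move=> Ha Hb; apply/eqP; rewrite -subr_eq0 -cabs_eq0; apply/eqP.
apply/eqP; rewrite eq_le cabs_ge0 andbT; apply/ler_addgt0Pr => e e0; rewrite add0r.
have e2 : 0 < e / 2 by rewrite divr_gt0.
have [N1 H1] := Ha _ e2; have [N2 H2] := Hb _ e2.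
have h1 := H1 (maxn N1 N2) (leq_maxl _ _); have h2 := H2 (maxn N1 N2) (leq_maxr _ _).
have := cabsD (a - u (maxn N1 N2)) (u (maxn N1 N2) - b).
rewrite addrA subrK cabsB; lra.
Qed.

Lemma cv_sum (I : Type) (r : seq I) (P : pred I) (Fn : I -> nat -> C) (Fl : I -> C) :
  (forall i, P i -> cv (Fn i) (Fl i)) ->
  cv (fun n => \sum_(i <- r | P i) Fn i n) (\sum_(i <- r | P i) Fl i).
Proof.
move=> H; elim: r => [|x r IH].
  by rewrite big_nil; apply: cv_ext (cv_const 0) => n; rewrite big_nil.
rewrite big_cons; case: (boolP (P x)) => Px.
  by apply: cv_ext (cv_add (H _ Px) IH) => n; rewrite big_cons Px.
by apply: cv_ext IH => n; rewrite big_cons (negPf Px).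
Qed.

Lemma cv_prod (I : Type) (r : seq I) (P : pred I) (Fn : I -> nat -> C) (Fl : I -> C) :
  (forall i, P i -> cv (Fn i) (Fl i)) ->
  cv (fun n => \prod_(i <- r | P i) Fn i n) (\prod_(i <- r | P i) Fl i).
Proof.
move=> H; elim: r => [|x r IH].
  by rewrite big_nil; apply: cv_ext (cv_const 1) => n; rewrite big_nil.
rewrite big_cons; case: (boolP (P x)) => Px.
  by apply: cv_ext (cv_mul (H _ Px) IH) => n; rewrite big_cons Px.
by apply: cv_ext IH => n; rewrite big_cons (negPf Px).
Qed.

Lemma cv_det k (M : nat -> 'M[C]_k) (L : 'M[C]_k) :
  (forall i j, cv (fun n => M n i j) (L i j)) -> cv (fun n => \det (M n)) (\det L).
Proof.
move=> H; apply: cv_sum => s _; apply: cv_mul; first exact: cv_const.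
by apply: cv_prod => i _; apply: H.
Qed.

End Cv.


Section Closed.
Variable R : realType.
Local Notation C := R[i].

Lemma MPc k m (S0 : ksub m k) (f : 'I_k -> 'I_m) : exists e : C, exists T : ksub m k,
  forall Z : 'M[C]_(k,m), \det (\matrix_(a,b) Z a (f b)) = e * pl Z T.
Proof.
have [e [T HT]] := @MP C _ _ S0 f; exists e, T => Z.
transitivity (\det (rsel Z^T f)).
  by rewrite -det_tr; congr (\det _); apply/matrixP => i j; rewrite !mxE.
rewrite HT /pl -det_tr; congr (_ * \det _); apply/matrixP => i j; rewrite !mxE //.
Qed.

Lemma pl_mul k m (M : 'M[C]_k) (Z : 'M[C]_(k,m)) T : pl (M *m Z) T = \det M * pl Z T.
Proof.
rewrite /pl -det_mulmx; congr (\det _); apply/matrixP => a b; rewrite !mxE.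
by apply: eq_bigr => j _; rewrite !mxE.
Qed.

Lemma det_colrep k (v : 'I_k -> C) a :
  \det (\matrix_(i,b) if b == a then v i else (i == b)%:R) = v a.
Proof.
rewrite -det_tr (expand_det_row _ a) (bigD1 a) //= big1 ?addr0.
  rewrite !mxE eqxx /cofactor -signr_odd addnn odd_double expr0 mul1r.
  have -> : row' a (col' a (\matrix_(i,b) if b == a then v i else (i == b)%:R)^T) = 1%:M.
    apply/matrixP => i j; rewrite !mxE eq_sym (negPf (neq_lift a i)).
    by rewrite (inj_eq (@lift_inj _ a)) eq_sym.
  by rewrite det1 mulr1.
move=> j nja; rewrite /cofactor.
case: (unliftP a j) => [i' E|E]; last by rewrite E eqxx in nja.
rewrite (expand_det_row _ i') big1 ?mulr0 // => j' _; rewrite !mxE.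
by rewrite eq_sym (negPf (neq_lift a i')) -E eq_sym (negPf (neq_lift j j')) mul0r.
Qed.

Lemma rowfree_minor k m (B : 'M[C]_(k,m)) S : pl B S != 0 -> row_free B.
Proof.
move=> nz.
pose P : 'M[C]_(m,k) := \matrix_(j,b) (j == ksub_idx S b)%:R.
have E : B *m P = \matrix_(a,b) B a (ksub_idx S b).
  apply/matrixP => a b; rewrite !mxE (bigD1 (ksub_idx S b)) //= mxE eqxx mulr1 big1 ?addr0 //.
  by move=> j /negPf nj; rewrite mxE nj mulr0.
have Hu : B *m P \in unitmx by rewrite unitmxE E unitfE.
rewrite /row_free eqn_leq rank_leq_row /= -{1}(mxrank_unit Hu) mxrankM_maxl //.
Qed.

Lemma closedness k m (S : ksub m k) (q : nat -> ksub m k -> C) (p : ksub m k -> C) :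
 (forall nu, exists Z : 'M[C]_(k,m), exists c : C, forall T, q nu T = c * pl Z T) ->
 (forall T, cv (fun nu => q nu T) (p T)) -> p S != 0 ->
 exists B : 'M[C]_(k,m), row_free B /\ forall T, p T = p S * pl B T.
Proof.
move=> Hq Hc nz.
pose f (a : 'I_k) (j : 'I_m) (b : 'I_k) := if b == a then j else ksub_idx S b.
have Hm a j : exists x : C * ksub m k, forall Z : 'M[C]_(k,m),
    \det (\matrix_(a',b) Z a' (f a j b)) = x.1 * pl Z x.2.
  by have [e [T HT]] := MPc S (f a j); exists (e,T).
pose ch a j := proj1_sig (constructive_indefinite_description _ (Hm a j)).
have chP a j (Z : 'M[C]_(k,m)) : \det (\matrix_(a',b) Z a' (f a j b)) = (ch a j).1 * pl Z (ch a j).2.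
  exact: (proj2_sig (constructive_indefinite_description _ (Hm a j)) Z).
pose Bq (x : ksub m k -> C) : 'M[C]_(k,m) := \matrix_(a,j) ((ch a j).1 * x (ch a j).2 / x S).
have Bq_ext x y : (forall T, x T = y T) -> Bq x = Bq y.
  by move=> E; apply/matrixP => a j; rewrite !mxE !E.
have key (Z : 'M[C]_(k,m)) c : c * pl Z S != 0 -> forall T, pl (Bq (fun T => c * pl Z T)) T = pl Z T / pl Z S.
  rewrite mulf_eq0 negb_or => /andP[c0 nzZ].
  pose N : 'M[C]_k := \matrix_(a,b) Z a (ksub_idx S b).
  have Nu : N \in unitmx by rewrite unitmxE unitfE.
  pose Z' := invmx N *m Z.
  have Z'S i b : Z' i (ksub_idx S b) = (i == b)%:R.
    have : (invmx N *m N) i b = (1%:M : 'M[C]_k) i b by rewrite mulVmx.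
    rewrite !mxE => <-; apply: eq_bigr => j _; rewrite !mxE //.
  have plZ' T : pl Z' T = pl Z T / pl Z S by rewrite /Z' pl_mul det_inv mulrC.
  have BE : Bq (fun T => c * pl Z T) = Z'.
    apply/matrixP => a j; rewrite mxE.
    have := chP a j Z'.
    have -> : \matrix_(a',b) Z' a' (f a j b) =
              \matrix_(i,b) if b == a then Z' i j else (i == b)%:R.
      by apply/matrixP => i b; rewrite !mxE /f; case: eqP => // _; rewrite -(Z'S i b) mxE.
    rewrite det_colrep plZ' => ->.
    by rewrite -mulrA invfM mulrACA divff // mul1r mulrA.
  by move=> T; rewrite BE plZ'.
have [N0 HN0] := cv_nz (Hc S) nz.
have qnz n : (N0 <= n)%N -> q n S != 0.
  move=> /HN0 h; rewrite -cabs_eq0; apply/eqP => E; move: h; rewrite E.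
  have := cabs_ge0 (p S); have : cabs (p S) != 0 by rewrite cabs_eq0.
  move=> ne ge; rewrite ltNge divr_ge0 //.
have ev T n : (N0 <= n)%N -> pl (Bq (q n)) T = q n T / q n S.
  move=> hn; have [Z [c Hzc]] := Hq n.
  have nzc : c * pl Z S != 0 by rewrite -Hzc qnz.
  rewrite (Bq_ext _ _ Hzc) key // !Hzc.
  move: nzc; rewrite mulf_eq0 negb_or => /andP[c0 _].
  by rewrite invfM mulrACA divff // mul1r.
have conv T : cv (fun n => pl (Bq (q n)) T) (pl (Bq p) T).
  apply: cv_det => a b; rewrite !mxE.
  apply: cv_ext (cv_mul (cv_mul (cv_const _) (Hc _)) (cv_inv (Hc S) nz)) => n.
  by rewrite !mxE.
have plB T : pl (Bq p) T = p T / p S.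
  apply: (cv_unique (conv T)).
  apply: (cv_ext_ev (N0 := N0)) (cv_mul (Hc T) (cv_inv (Hc S) nz)) => n hn.
  by rewrite (ev T n hn).
exists (Bq p); split.
  by apply: (rowfree_minor (S := S)); rewrite plB (divff nz) oner_eq0.
by move=> T; rewrite plB mulrC mulfVK.
Qed.

End Closed.


Section Main.
Variable R : realType.
Local Notation C := R[i].

Lemma kerK k m (B0 : 'M[C]_(k, m)) : row_free B0 -> (k + k = m)%N ->
  exists K : 'M[C]_(m, k), forall x : 'rV[C]_m, x *m K = 0 -> (x <= B0)%MS.
Proof.
move=> rf km.
pose A := cokermx B0.
have rA : \rank A = k.
  by rewrite mxrank_coker (eqP rf) -km addnK.
suff H : forall r (C1 : 'M[C]_(m,r)) (C2 : 'M[C]_(r,m)), C1 *m C2 = A -> r = k ->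
    exists K : 'M[C]_(m, k), forall x : 'rV[C]_m, x *m K = 0 -> (x <= B0)%MS.
  exact: (H _ _ _ (mulmx_base A) rA).
move=> r C1 C2 E rk; subst r.
by exists C1 => x xK; rewrite submxE -/A -E mulmxA xK mul0mx.
Qed.

Lemma rv_nonzero m (x : 'rV[C]_m) : x != 0 -> nonzero (fun j => x 0 j).
Proof.
move=> nz; case: (boolP [exists j, x 0 j != 0]) => [/existsP [j hj]|H]; first by exists j.
case/eqP: nz; apply/matrixP => i j; rewrite (ord1 i) mxE.
by apply/eqP; move: H; rewrite negb_exists => /forallP /(_ j); rewrite negbK.
Qed.

Lemma meet k m (Y B0 : 'M[C]_(k,m)) (K : 'M[C]_(m,k)) :
  row_free Y -> (forall x : 'rV[C]_m, x *m K = 0 -> (x <= B0)%MS) ->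
  \det (Y *m K) = 0 -> exists x : 'I_m -> C, in_plane Y x /\ in_plane B0 x.
Proof.
move=> rfY HK /eqP /det0P [v nzv vYK].
pose x := v *m Y.
have nzx : x != 0.
  apply: contra nzv => /eqP x0; case/row_freeP: rfY => B' HB'.
  by rewrite -[v]mulmx1 -HB' mulmxA -/x x0 mul0mx.
have : (x <= B0)%MS by apply: HK; rewrite /x -mulmxA.
case/submxP => w xw.
exists (fun j => x 0 j); split; split; try exact: rv_nonzero.
  by exists (fun a => v 0 a) => j; rewrite /x mxE.
by exists (fun a => w 0 a) => j; rewrite xw mxE.
Qed.

Lemma lim_nonzero (I : finType) (M : nat -> I -> I -> C) T :
  limit_of M T -> exists i j, T i j != 0.
Proof.
case=> c [_ [Hn Hc]].
case: (boolP [exists i, [exists j, T i j != 0]]) => [/existsP[i /existsP [j h]]|H].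
  by exists i, j.
have [N HN] := Hc (1/2) (divr_gt0 ltr01 (ltr0Sn _ 1)).
have [_ [i [j Hij]]] := Hn N.
have := HN N (leqnn N) i j.
have -> : T i j = 0.
  apply/eqP; move: H; rewrite negb_exists => /forallP /(_ i).
  by rewrite negb_exists => /forallP /(_ j); rewrite negbK.
rewrite subr0 Hij; lra.
Qed.

Definition Phi k m (That : ksub m k -> ksub m k -> C) (Y : 'M[C]_(k,m)) : ksub m k -> C :=
  fun S' => \sum_T That S' T * pl Y T.

Lemma F3 k m (That : ksub m k -> ksub m k -> C) (s : nat -> 'M[C]_m) (c : nat -> C)
  (K : 'M[C]_(m,k)) :
  (forall T T', cv (fun nu => c nu * ext (s nu) T T') (That T T')) ->
  (forall B, row_free B -> (exists u, forall S, pl B S = appl That u S) ->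
     nonzero (pl B) -> \det (B *m K) != 0) ->
  forall Y, nonzero (Phi That Y) ->
    \sum_T Phi That Y T * \det (rsel K (ksub_idx T)) != 0.
Proof.
move=> Hc HB Y [S nzS].
have cl := @closedness R k m S (fun nu T => c nu * pl (Y *m (s nu)^T) T) (Phi That Y).
have [|||B [rfB HBe]] := cl.
- by move=> nu; exists (Y *m (s nu)^T), (c nu).
- move=> T; apply: (cv_ext (u := fun nu => \sum_T' c nu * ext (s nu) T T' * pl Y T')).
    by move=> nu; rewrite -ext_pl big_distrr /=; apply: eq_bigr => T' _; rewrite mulrA.
  by apply: cv_sum => T' _; apply: cv_mul; [exact: Hc|exact: cv_const].
- exact: nzS.
have plBS : pl B S = 1.
  by apply: (mulfI nzS); rewrite -HBe mulr1.
have -> : \sum_T Phi That Y T * \det (rsel K (ksub_idx T)) = Phi That Y S * \det (B *m K).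
  rewrite (CB _ _ S) big_distrr /=; apply: eq_bigr => T _; by rewrite [in LHS]HBe mulrA.
rewrite mulf_eq0 negb_or nzS /=; apply: HB => //.
  exists (fun T => (Phi That Y S)^-1 * pl Y T) => S'.
  rewrite /appl; under eq_bigr do rewrite mulrCA.
  by rewrite -big_distrr /= -/(Phi That Y S') [Phi That Y S']HBe (mulKf nzS).
by exists S; rewrite plBS oner_eq0.
Qed.

End Main.


Lemma decomp (R : realType) k m (That : ksub m k -> ksub m k -> R[i]) (s : nat -> 'M[R[i]]_m)
  (c : nat -> R[i]) (Y : 'M[R[i]]_(k,m)) S :
  (forall T T', cv (fun nu => c nu * ext (s nu) T T') (That T T')) ->
  Phi That Y S != 0 ->
  exists B : 'M[R[i]]_(k,m), row_free B /\ forall T, Phi That Y T = Phi That Y S * pl B T.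
Proof.
move=> Hc nzS.
apply: (@closedness R k m S (fun nu T => c nu * pl (Y *m (s nu)^T) T) (Phi That Y)) => //.
- by move=> nu; exists (Y *m (s nu)^T), (c nu).
- move=> T; apply: (cv_ext (u := fun nu => \sum_T' c nu * ext (s nu) T T' * pl Y T')).
    by move=> nu; rewrite -ext_pl big_distrr /=; apply: eq_bigr => T' _; rewrite mulrA.
  by apply: cv_sum => T' _; apply: cv_mul; [exact: Hc|exact: cv_const].
Qed.

Lemma PhiE (R : realType) k m (That : ksub m k -> ksub m k -> R[i]) T S'' :
  Phi That (Emx R[i] T) S'' = That S'' T.
Proof.
rewrite /Phi (bigD1 T) //= pl_E eqxx mulr1 big1 ?addr0 // => T' nT.
by rewrite pl_E (negPf nT) mulr0.
Qed.

Unset Implicit Arguments. Set Strict Implicit.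

Theorem proposition4p7 (R : realType) (n : nat)
    (G : 'M[R[i]]_(n.*2.+2) -> Prop) :
  type_L G ->
  forall s : nat -> 'M[R[i]]_(n.*2.+2), normal_seq G s ->
  forall That, limit_of (fun nu => extp n.+1 (s nu)) That ->
  exists B : 'M[R[i]]_(n.+1, n.*2.+2), row_free B /\
    forall v : ksub n.*2.+2 n.+1 -> R[i],
      (nonzero v /\ exists u, forall S, v S = appl That u S) <->
      (exists c : R[i], c != 0 /\ forall S, v S = c * plucker B S).
Proof.
move=> [_ [_ [D [[_ [B0 [rfB0 HB0]]] HD]]]] s Hs That HT.
have km : (n.+1 + n.+1 = n.*2.+2)%N by rewrite addSn addnS addnn.
have [K HK] := kerK rfB0 km.
pose psi (T : ksub n.*2.+2 n.+1) := \det (rsel K (ksub_idx T)).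
have [c [_ [_ Hcv]]] := HT.
have Hc : forall T T', cv (fun nu => c nu * ext (s nu) T T') (That T T').
  move=> T T' e e0; have [N HN] := Hcv e e0; exists N => nu hn; exact: HN nu hn T T'.
have HBK : forall B, row_free B -> (exists u, forall S, pl B S = appl That u S) ->
    nonzero (pl B) -> \det (B *m K) != 0.
  move=> B rfB [u Hu] nzB; apply/eqP => d0.
  have [x [xB xB0]] := meet rfB HK d0.
  have [_ nL] := HD x (HB0 x xB0).
  apply: nL; exists B; split => //; split => //; exists s; split => //.
  exists That; split => //; split => //; exists u => S; exact: Hu S.
have F3' := F3 Hc HBK.
pose w T := \sum_T' psi T' * That T' T.
have FwE Y : Fw w Y = \sum_T Phi That Y T * psi T.
  rewrite /Fw /Phi; under eq_bigr do rewrite /w big_distrl /=.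
  rewrite exchange_big; apply: eq_bigr => T' _; rewrite big_distrl /=.
  by apply: eq_bigr => T _; rewrite [RHS]mulrC !mulrA.
have FwP S'' Y : Fw (That S'') Y = Phi That Y S'' by [].
have [i [j nzij]] := lim_nonzero HT.
pose Y0 := Emx R[i] j.
have PhiY0 : Phi That Y0 i = That i j by rewrite PhiE.
have nzY0 : nonzero (Phi That Y0) by exists i; rewrite PhiY0.
have nzw : Fw w Y0 != 0 by rewrite FwE; exact: F3' Y0 nzY0.
have hypA : forall S'' Y, Fw w Y = 0 -> Fw (That S'') Y = 0.
  move=> S'' Y; rewrite FwE FwP => H; apply/eqP; apply: contraT => nzS.
  by have := F3' Y (ex_intro _ S'' nzS); rewrite H eqxx.
have LA S'' Y := lemmaA (hypA S'') nzw Y.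
have nzi : Phi That Y0 i != 0 by rewrite PhiY0.
have [B [rfB HBe]] := decomp Hc nzi.
have plBi : pl B i = 1 by apply: (mulfI nzi); rewrite -HBe mulr1.
exists B; split => // v.
have plE : plucker B = pl B by [].
rewrite plE; split.
  case=> nzv [u Hu].
  pose beta := \sum_S Fw w (Emx R[i] S) / Fw w Y0 * u S.
  have vE S'' : v S'' = Phi That Y0 i * beta * pl B S''.
    rewrite Hu /appl.
    transitivity (\sum_S Phi That Y0 S'' * (Fw w (Emx R[i] S) / Fw w Y0 * u S)).
      apply: eq_bigr => S _; rewrite mulrA; congr (_ * _).
      have := LA S'' (Emx R[i] S); rewrite !FwP PhiE => E.
      by apply: (mulIf nzw); rewrite E -mulrA (mulfVK nzw).
    by rewrite -big_distrr /= -/beta [Phi _ _ S'']HBe mulrAC.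
  exists (Phi That Y0 i * beta); split.
    case: nzv => S1; apply: contra => /eqP z; by rewrite vE z mul0r.
  exact: vE.
case=> c0 [c0nz Hv]; split.
  by exists i; rewrite Hv plBi mulr1.
exists (fun T => c0 / Phi That Y0 i * pl Y0 T) => S''.
rewrite Hv /appl; under eq_bigr do rewrite mulrCA.
by rewrite -big_distrr /= -/(Phi That Y0 S'') [Phi _ _ S'']HBe mulrA (mulfVK nzi).
Qed.
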